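(* Let $(a^t)_{t\ge0}$ be a fixed sequence of numbers in $[0,1]$, and let $(R_t)_{t\ge0}$ be a sequence of non-negative integer-valued random variables such that: $R_0=0$; if $R_t\le 5$ then $R_{t+1}\le 6$ (otherwise arbitrary); and if $R_t\ge 6$, then, conditionally on the history up to time $t$, $R_{t+1}=R_t+1$ with probability $\frac35 a^t$, $R_{t+1}=R_t-4$ with probability $\frac25 a^t$, and $R_{t+1}=R_t-2$ with probability $1-a^t$. Then for all $i\ge 6$ and $t\ge0$, \[ \Pr[R_t=i]\le\Big(\frac23\Big)^{i-6}. \] *)

(* Defs.v *)
From HB Require Import structures.
From mathcomp Require Import all_boot all_order all_algebra.
From mathcomp Require Import all_classical all_reals all_analysis.
Set Implicit Arguments. Unset Strict Implicit. Unset Printing Implicit Defensive.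
Import Order.TTheory GRing.Theory Num.Theory.
Local Open Scope classical_set_scope.

Definition history (T : Type) (X : nat -> T -> nat) (t : nat) (h : nat -> nat)
  : set T := [set w | forall s, (s <= t)%N -> X s w = h s].

(* Main.v *)
Require Import Defs.
From HB Require Import structures.
From mathcomp Require Import all_boot all_order all_algebra.
From mathcomp Require Import all_classical all_reals all_analysis.
From mathcomp Require Import ring lra zify.
Import Order.TTheory GRing.Theory Num.Theory.
Local Open Scope classical_set_scope.
Local Open Scope ring_scope.
Set Implicit Arguments. Unset Strict Implicit.

Definition Bset (T : Type) (X : nat -> T -> nat) (t n : nat) (h : nat -> nat) : set T :=
  [set w | forall s, (n <= s <= t)%N -> X s w = h s].

Definition upd (h : nat -> nat) (n v : nat) : nat -> nat :=
  fun s => if s == n then v else h s.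

Lemma Bset_meas (d : measure_display) (T : measurableType d) (X : nat -> T -> nat)
  (hX : forall t k, measurable [set w | X t w = k]) t n h :
  measurable (Bset X t n h).
Proof.
have -> : Bset X t n h = \bigcap_s (if (n <= s <= t)%N then [set w | X s w = h s] else setT).
  apply/seteqP; split => w /=.
    by move=> Hw s _; case: ifP => // Hs; apply: Hw.
  by move=> Hw s Hs; have := Hw s I; rewrite Hs.
apply: bigcapT_measurable => s; case: ifP => _ //; exact: measurableT.
Qed.

Lemma Bset_split (T : Type) (X : nat -> T -> nat) t n h : (n < t)%N ->
  Bset X t n.+1 h = \bigcup_v Bset X t n (upd h n v).
Proof.
move=> nt; apply/seteqP; split => w /=.
  move=> Hw; exists (X n w) => // s /andP[ns st]; rewrite /upd.
  case: eqP => [->//|/eqP sn]; apply: Hw; rewrite st andbT ltn_neqAle ns eq_sym sn //.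
move=> [v _ Hw] s /andP[ns st]; have := Hw s; rewrite /upd.
have -> : (s == n) = false by apply/negbTE; rewrite neq_ltn ns orbT.
by apply; rewrite st (ltnW ns).
Qed.

Lemma Bset_triv (T : Type) (X : nat -> T -> nat) t n h (E : set T) : (n <= t)%N ->
  trivIset setT (fun v => Bset X t n (upd h n v) `&` E).
Proof.
move=> nt i j _ _ [w [[Hi _] [Hj _]]].
have := Hi n; have := Hj n; rewrite /upd eqxx leqnn nt /= => <- // Hn.
by rewrite Hn.
Qed.

Lemma unfix (d : measure_display) (T : measurableType d) (R : realType)
  (P : probability T R) (X : nat -> T -> nat)
  (hX : forall t k, measurable [set w | X t w = k]) t j (E : set T) (c : R) :
  measurable E -> 0 <= c ->
  (forall h : nat -> nat, h t = j -> P (history X t h `&` E) = (c%:E * P (history X t h))%E) ->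
  P ([set w | X t w = j] `&` E) = (c%:E * P [set w | X t w = j])%E.
Proof.
move=> mE c0 H.
suff : forall n, (n <= t)%N -> forall h : nat -> nat, h t = j ->
    P (Bset X t n h `&` E) = (c%:E * P (Bset X t n h))%E.
  move=> /(_ t (leqnn t) (fun _ => j) erefl).
  have -> // : Bset X t t (fun _ => j) = [set w | X t w = j].
  apply/seteqP; split => w /=; first by move/(_ t); rewrite leqnn; apply.
  by move=> Hw s; rewrite -eqn_leq => /eqP <-.
elim => [_ h ht|n IH nt h ht].
  have -> : Bset X t 0 h = history X t h by apply/seteqP; split => w /= Hw s Hs; apply: Hw.
  exact: H.
rewrite Bset_split // setI_bigcupl.
rewrite measure_semi_bigcup; last 3 first.
- by move=> i; apply: measurableI => //; apply: Bset_meas.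
- by apply: Bset_triv; apply: ltnW.
- by apply: bigcup_measurable => i _; apply: measurableI => //; apply: Bset_meas.
rewrite measure_semi_bigcup; last 3 first.
- by move=> i; apply: Bset_meas.
- have := @Bset_triv T X t n h setT (ltnW nt).
  by move=> Ht i k Hi Hk; rewrite -(setIT (Bset _ _ _ _)) -(setIT (Bset X t n (upd h n k))); apply: Ht.
- by apply: bigcup_measurable => i _; apply: Bset_meas.
rewrite -nneseriesZl //; apply: eq_eseriesr => v _.
apply: IH; first exact: ltnW.
by rewrite /upd; case: eqP => // tn; move: nt; rewrite tn ltnn.
Qed.
Lemma le5 (d : measure_display) (T : measurableType d) (R : realType)
  (P : probability T R) (A B C D E : set T) :
  measurable A -> measurable B -> measurable C -> measurable D -> measurable E ->
  (P (A `|` B `|` C `|` D `|` E) <= P A + P B + P C + P D + P E)%E.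
Proof.
move=> mA mB mC mD mE.
have mAB := measurableU _ _ mA mB.
have mABC := measurableU _ _ mAB mC.
have mABCD := measurableU _ _ mABC mD.
apply: le_trans (measureU2 P mABCD mE) _; apply: leeD => //.
apply: le_trans (measureU2 P mABC mD) _; apply: leeD => //.
apply: le_trans (measureU2 P mAB mC) _; apply: leeD => //.
exact: measureU2.
Qed.

Lemma fin_eq0 (R : realType) (x y : \bar R) : y \is a fin_num -> y = (x + y)%E -> x = 0%E.
Proof. by move=> fy e; rewrite -(addeK x fy) -e subee. Qed.

Lemma arith (R : realType) (a x : R) : 0 <= a <= 1 -> 0 <= x ->
  3 / 5 * a * x + 2 / 5 * a * (x * (2/3) ^+ 5) + (1 - a) * (x * (2/3)^+3) <= x * (2/3).
Proof.
move=> /andP[a0 a1] x0.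
have e5 : (2/3 : R) ^+ 5 = 32/243 by rewrite !exprS expr0; field.
have e3 : (2/3 : R) ^+ 3 = 8/27 by rewrite !exprS expr0; field.
rewrite e5 e3.
have h1 : 0 <= a * x by apply: mulr_ge0.
have h2 : a * x <= x by rewrite -[leRHS]mul1r ler_wpM2r.
nra.
Qed.

Theorem lemma5 (d : measure_display) (T : measurableType d) (R : realType)
  (P : probability T R) (a : nat -> R) (X : nat -> T -> nat)
  (ha : forall t, 0 <= a t <= 1)
  (hX : forall t k, measurable [set w | X t w = k])
  (h0 : P [set w | X 0%N w <> 0%N] = 0%E)
  (hlow : forall t, P [set w | (X t w <= 5)%N /\ (6 < X t.+1 w)%N] = 0%E)
  (hup : forall t (h : nat -> nat), (6 <= h t)%N ->
     P (history X t h `&` [set w | X t.+1 w = (h t + 1)%N])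
       = ((3 / 5 * a t)%:E * P (history X t h))%E)
  (hdown4 : forall t (h : nat -> nat), (6 <= h t)%N ->
     P (history X t h `&` [set w | X t.+1 w = (h t - 4)%N])
       = ((2 / 5 * a t)%:E * P (history X t h))%E)
  (hdown2 : forall t (h : nat -> nat), (6 <= h t)%N ->
     P (history X t h `&` [set w | X t.+1 w = (h t - 2)%N])
       = ((1 - a t)%:E * P (history X t h))%E) :
  forall (i t : nat), (6 <= i)%N ->
    (P [set w | X t w = i] <= ((2 / 3) ^+ (i - 6))%:E)%E.
Proof.
move=> i t; elim: t i => [|t IH] i i6.
  apply: le_trans (_ : P [set w | X 0%N w <> 0%N] <= _)%E.
    apply: le_measure; rewrite ?inE //.
      have -> : [set w | X 0%N w <> 0%N] = ~` [set w | X 0%N w = 0%N] by [].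
      exact: measurableC.
    by move=> w /= ->; move: i6; case: i.
  by rewrite h0 lee_fin exprn_ge0.
have fin A : measurable A -> P A \is a fin_num by move=> mA; apply: fin_num_measure.
have [a0 a1] := andP (ha t).
pose ev s k := [set w | X s w = k].
have mev s k : measurable (ev s k) := hX s k.
have Tup j : (6 <= j)%N -> P (ev t j `&` ev t.+1 (j + 1)%N) = ((3 / 5 * a t)%:E * P (ev t j))%E.
  move=> j6; rewrite /ev; apply: (@unfix _ _ _ P X hX t j); [exact: hX|by rewrite mulr_ge0|].
  by move=> h hj; rewrite -hj; apply: hup; rewrite hj.
have Td4 j : (6 <= j)%N -> P (ev t j `&` ev t.+1 (j - 4)%N) = ((2 / 5 * a t)%:E * P (ev t j))%E.
  move=> j6; rewrite /ev; apply: (@unfix _ _ _ P X hX t j); [exact: hX|by rewrite mulr_ge0|].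
  by move=> h hj; rewrite -hj; apply: hdown4; rewrite hj.
have Td2 j : (6 <= j)%N -> P (ev t j `&` ev t.+1 (j - 2)%N) = ((1 - a t)%:E * P (ev t j))%E.
  move=> j6; rewrite /ev; apply: (@unfix _ _ _ P X hX t j); [exact: hX|by rewrite subr_ge0|].
  by move=> h hj; rewrite -hj; apply: hdown2; rewrite hj.
pose U j := ev t.+1 (j + 1)%N `|` ev t.+1 (j - 4)%N `|` ev t.+1 (j - 2)%N.
have mU j : measurable (U j) by rewrite /U /ev; do 2 apply: measurableU => //.
have R0 j : (6 <= j)%N -> P (ev t j `\` U j) = 0%E.
  move=> j6; apply: (@fin_eq0 _ _ (P (ev t j))); first exact: (fin _ (hX t j)).
  rewrite [in LHS](measureDI P (hX t j) (mU j)); congr (_ + _)%E.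
  rewrite /U !setIUr measureU; last 3 first.
  - by apply: measurableU; apply: measurableI; apply: mev.
  - by apply: measurableI; apply: mev.
  - apply/seteqP; split => // w /= [[[_ h1]|[_ h1]] [_ h2]]; rewrite /ev /= in h1 h2; lia.
  rewrite measureU; last 3 first.
  - by apply: measurableI; apply: mev.
  - by apply: measurableI; apply: mev.
  - apply/seteqP; split => // w /= [[_ h1] [_ h2]]; rewrite /ev /= in h1 h2; lia.
  have T1 := Tup j j6; have T2 := Td4 j j6; have T3 := Td2 j j6.
  transitivity ((3 / 5 * a t)%:E * P (ev t j) + (2 / 5 * a t)%:E * P (ev t j)
     + (1 - a t)%:E * P (ev t j))%E.
    by congr (_ + _ + _)%E; [exact: T1|exact: T2|exact: T3].
  rewrite -(fineK (fin _ (hX t j))) -!EFinM -!EFinD; congr EFin.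
  by field.
pose N := \bigcup_j (if (6 <= j)%N then ev t j `\` U j else set0).
have mN : measurable N.
  by apply: bigcupT_measurable => j; case: ifP => _ //; apply: measurableD.
have PN : P N = 0%E.
  rewrite measure_semi_bigcup //.
  - by apply: eseries0 => j _ _; case: ifP => // j6; apply: R0.
  - by move=> j; case: ifP => _ //; apply: measurableD.
  - move=> j k _ _ [w []]; case: ifP => _ // [Hj _]; case: ifP => _ // [Hk _].
    by rewrite -Hj -Hk.
have [->|i7] := eqVneq i 6%N.
  by rewrite subnn expr0; apply: probability_le1.
have {i7} i7 : (7 <= i)%N by rewrite ltn_neqAle eq_sym i7 i6.
pose L := [set w | (X t w <= 5)%N /\ (6 < X t.+1 w)%N].
have mL : measurable L.
  have -> : L = \bigcup_j (if (j <= 5)%N then ev t j `&` \bigcup_(k in [set k | (6 < k)%N]) ev t.+1 k else set0).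
    apply/seteqP; split => w /=.
      by move=> [h1 h2]; exists (X t w) => //; rewrite h1; split => //; exists (X t.+1 w).
    move=> [j _]; case: ifP => // j5 [h1 [k /= k6 h2]].
    rewrite /L /ev /= in h1 h2 *; split; lia.
  apply: bigcupT_measurable => j; case: ifP => _ //; apply: measurableI => //.
  by apply: bigcup_measurable.
pose A1 := ev t (i - 1)%N `&` ev t.+1 (i - 1 + 1)%N.
pose A2 := ev t (i + 4)%N `&` ev t.+1 (i + 4 - 4)%N.
pose A3 := ev t (i + 2)%N `&` ev t.+1 (i + 2 - 2)%N.
have cover : ev t.+1 i `<=` N `|` L `|` A1 `|` A2 `|` A3.
  move=> w /= Hw.
  have [j5|j6] := leqP (X t w) 5.
    by left; left; left; right; split => //; rewrite Hw; lia.
  have [inU|notU] := pselect (U (X t w) w).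
    move: inU; rewrite /U /= => -[[h1|h1]|h1].
    + by left; left; right; rewrite /ev /= in Hw h1; split; rewrite /ev /=; lia.
    + by left; right; rewrite /ev /= in Hw h1; split; rewrite /ev /=; lia.
    + by right; rewrite /ev /= in Hw h1; split; rewrite /ev /=; lia.
  left; left; left; left; exists (X t w) => //.
  by rewrite ifT //; split.
have mA1 : measurable A1 := measurableI _ _ (mev _ _) (mev _ _).
have mA2 : measurable A2 := measurableI _ _ (mev _ _) (mev _ _).
have mA3 : measurable A3 := measurableI _ _ (mev _ _) (mev _ _).
have mall := measurableU _ _ (measurableU _ _ (measurableU _ _ (measurableU _ _ mN mL) mA1) mA2) mA3.
apply: le_trans (le_measure _ _ _ cover) _; rewrite ?inE //.
apply: le_trans (le5 P mN mL mA1 mA2 mA3) _.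
rewrite PN hlow add0e add0e.
rewrite /A1 /A2 /A3 Tup ?Td4 ?Td2; try lia.
have B1 := IH (i - 1)%N ltac:(lia).
have B2 := IH (i + 4)%N ltac:(lia).
have B3 := IH (i + 2)%N ltac:(lia).
apply: le_trans (leeD (leeD (lee_wpmul2l _ B1) (lee_wpmul2l _ B2)) (lee_wpmul2l _ B3)) _.
- by rewrite lee_fin mulr_ge0.
- by rewrite lee_fin mulr_ge0.
- by rewrite lee_fin subr_ge0.
rewrite -!EFinM -!EFinD lee_fin.
have -> : (i - 1 - 6 = i - 7)%N by lia.
have -> : (i + 4 - 6 = (i - 7) + 5)%N by lia.
have -> : (i + 2 - 6 = (i - 7) + 3)%N by lia.
have -> : (i - 6 = (i - 7) + 1)%N by lia.
rewrite !exprD expr1.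
apply: arith; [by rewrite a0 a1|].
by rewrite exprn_ge0.
Qed.
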